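(* Let $(S_i)_{i\ge1}$ be an ordering of the monic irreducible polynomials of $\mathbb{F}_q[T]$ with $\deg S_i\le\deg S_{i+1}$, let $R_n=\prod_{i=1}^nS_i$, and write uniquely $R_n=\big(\prod_{\deg P\le m_n}P\big)\big(\prod_{i=1}^{r_n}Q_i\big)$ with non-negative integers $m_n,r_n$ and distinct primes $Q_i$ of degree $m_n+1$. Then for all positive integers $n$, $$\log_q\log_q|R_n| = m_n+O(1),$$ and consequently $m_n\ll\log_q\log_q|R_n|$ for all $n$ with $m_n\ge1$, where the implied constant is independent of $q$.
   Context: $q$ is a prime power, $P$ denotes monic irreducible polynomials in $\mathbb{F}_q[T]$, and $|A|=q^{\deg A}$. *)

(* Defs.v *)
From Stdlib Require Import Reals.
From mathcomp Require Import all_boot all_order all_algebra all_field.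
Set Implicit Arguments. Unset Strict Implicit. Unset Printing Implicit Defensive.
Import GRing.Theory.
Local Open Scope ring_scope.

(* degree of a polynomial (deg 0 = 0, irrelevant here since we only use nonzero polys) *)
Definition pdeg (F : fieldType) (p : {poly F}) : nat := (size p).-1.

Definition monic_irr (F : fieldType) (p : {poly F}) : Prop :=
  p \is monic /\ irreducible_poly p.

Definition pabs (F : finFieldType) (p : {poly F}) : nat := (#|F| ^ pdeg p)%N.

Definition logq (q : nat) (x : R) : R := Rdiv (ln x) (ln (INR q)).

(* (S_i)_{i >= 1} is an ordering (enumeration without repetition) of all monic
   irreducible polynomials with deg S_i <= deg S_{i+1}.  S 0 is unused. *)
Definition is_prime_ordering (F : finFieldType) (S : nat -> {poly F}) : Prop :=
  [/\ (forall i, (1 <= i)%N -> monic_irr (S i)),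
      (forall i j, (1 <= i)%N -> (1 <= j)%N -> S i = S j -> i = j),
      (forall P, monic_irr P -> exists2 i, (1 <= i)%N & S i = P)
    & (forall i, (1 <= i)%N -> (pdeg (S i) <= pdeg (S i.+1))%N)].

Definition Rprod (F : finFieldType) (S : nat -> {poly F}) (n : nat) : {poly F} :=
  \prod_(1 <= i < n.+1) S i.

(* (m, r, Q, L) is the decomposition R_n = (prod_{deg P <= m} P)(prod_{i=1}^r Q_i):
   L lists (without repetition) exactly the primes of degree <= m,
   Q_1..Q_r (here Q 0 .. Q (r-1)) are distinct primes of degree m+1,
   and r is less than the number of primes of degree m+1 (uniqueness). *)
Definition is_decomp (F : finFieldType) (Rn : {poly F}) (m r : nat)
    (Q : nat -> {poly F}) (L : seq {poly F}) : Prop :=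
  [/\ uniq L /\ (forall P, P \in L <-> (monic_irr P /\ (pdeg P <= m)%N)),
      (forall i, (i < r)%N -> monic_irr (Q i) /\ pdeg (Q i) = m.+1),
      (forall i j, (i < r)%N -> (j < r)%N -> Q i = Q j -> i = j),
      (exists P, [/\ monic_irr P, pdeg P = m.+1 & forall i, (i < r)%N -> Q i <> P])
    & Rn = (\prod_(P <- L) P) * \prod_(i < r) Q i].

(* Main.v *)
Require Import Defs.
From Stdlib Require Import Reals Classical Lra.
From mathcomp Require Import all_boot all_order all_algebra all_field.
From mathcomp Require Import zify.
Set Implicit Arguments. Unset Strict Implicit. Unset Printing Implicit Defensive.
Import GRing.Theory.
Import Pdiv.Field.
Section Alg.
Local Open Scope ring_scope.
Variable F : finFieldType.
Local Notation q := #|F|.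

Lemma q_gt1 : (1 < q)%N.
Proof. exact: finNzRing_gt1. Qed.

Lemma irr_scale (g : {poly F}) c : c != 0 -> irreducible_poly g -> irreducible_poly (c *: g).
Proof.
move=> c0 [s1 H]; split; first by rewrite size_scale.
move=> d sd; rewrite dvdpZr // => /(H d sd) e.
by apply: eqp_trans e _; rewrite eqp_sym eqp_scale.
Qed.

Lemma exists_irr_factor (g : {poly F}) : (1 < size g)%N ->
  exists P, [/\ P \is monic, irreducible_poly P & P %| g].
Proof.
move: {2}(size g) (leqnn (size g)) => n; elim: n g => [|n IH] g.
  by rewrite leqn0 => /eqP ->.
move=> sg g1.
have [irr|nirr] := classic (irreducible_poly g).
  have l0 : lead_coef g != 0 by rewrite lead_coef_eq0 -size_poly_gt0 ltnW.
  exists ((lead_coef g)^-1 *: g); split.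
  - by apply/monicP; rewrite lead_coefZ mulVf.
  - by apply: irr_scale => //; rewrite invr_eq0.
  - by rewrite dvdpZl // invr_eq0.
have [d [sd dg nd]] : exists d : {poly F}, [/\ size d != 1%N, d %| g & ~~ (d %= g)].
  apply: NNPP => H; apply: nirr; split => // d sd dg.
  by apply: NNPP => nd; apply: H; exists d; split => //; apply/negP.
have g0 : g != 0 by rewrite -size_poly_gt0 ltnW.
have d0 : d != 0 by apply: contraTneq dg => ->; rewrite dvd0p.
have sdg : (size d < size g)%N.
  rewrite ltn_neqAle dvdp_leq // andbT; by rewrite dvdp_size_eqp.
have h1 : (size d <= n)%N by rewrite -ltnS (leq_trans sdg).
have h2 : (1 < size d)%N by rewrite ltn_neqAle eq_sym sd /= size_poly_gt0.
have [P [PM PI Pd]] := IH d h1 h2.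
by exists P; split => //; apply: dvdp_trans Pd dg.
Qed.

Definition mirr (P : {poly F}) := P \is monic /\ irreducible_poly P.

Lemma coprime_irr (P Q : {poly F}) : mirr P -> mirr Q -> P != Q -> coprimep P Q.
Proof.
move=> [PM PI] [QM QI] PQ; rewrite irreducible_poly_coprime //.
apply/negP => PdQ; move/negP: PQ; apply.
have sP : size P != 1%N by case: PI => /gtn_eqF ->.
by rewrite -eqp_monic //; apply: QI.
Qed.

Lemma coprime_prod (P : {poly F}) (s : seq {poly F}) :
  (forall Q : {poly F}, Q \in s -> coprimep P Q) -> coprimep P (\prod_(Q <- s) Q).
Proof.
elim: s => [|Q s IH] H; first by rewrite big_nil coprimep1.
rewrite big_cons coprimepMr H ?mem_head //= IH // => R RS.
by apply: H; rewrite inE RS orbT.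
Qed.

Lemma prod_dvd (s : seq {poly F}) f : uniq s ->
  (forall P : {poly F}, P \in s -> mirr P /\ P %| f) -> \prod_(P <- s) P %| f.
Proof.
elim: s => [|P s IH] /=; first by rewrite big_nil dvd1p.
case/andP => Ps us H; rewrite big_cons Gauss_dvdp.
  rewrite (proj2 (H P (mem_head _ _))) IH // => Q Qs.
  by apply: H; rewrite inE Qs orbT.
apply: coprime_prod => Q Qs; apply: coprime_irr.
- exact: (proj1 (H P (mem_head _ _))).
- by apply: (proj1 (H Q _)); rewrite inE Qs orbT.
- by apply: contraNneq Ps => ->.
Qed.

Lemma sqfree_dvd (g : {poly F}) (s : seq {poly F}) : g != 0 -> uniq s ->
  (forall P : {poly F}, P \in s -> mirr P) ->
  (forall P : {poly F}, (1 < size P)%N -> ~~ (P * P %| g)) ->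
  (forall P : {poly F}, mirr P -> P %| g -> P \in s) ->
  g %| \prod_(P <- s) P.
Proof.
move: {2}(size g) (leqnn (size g)) => n; elim: n g s => [|n IH] g s.
  by rewrite leqn0 size_poly_eq0 => /eqP ->; rewrite eqxx.
move=> sg g0 us sirr sqf sall.
have [g1|g1] := leqP (size g) 1.
  have sg1 : size g = 1%N by apply/eqP; rewrite eqn_leq g1 size_poly_gt0.
  by rewrite (eqp_dvdl _ (_ : g %= 1)) ?dvd1p // -size_poly_eq1 sg1.
have [P [PM PI Pg]] := exists_irr_factor g1.
have Ps : P \in s by apply: sall.
have P0 : P != 0 by apply: irredp_neq0.
pose h := g %/ P.
have gE : g = h * P by rewrite /h divpK.
have h0 : h != 0 by apply: contraNneq g0; rewrite gE => ->; rewrite mul0r.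
rewrite (perm_big _ (perm_to_rem Ps)) big_cons gE mulrC dvdp_mul2l //.
have sP : (1 < size P)%N by case: PI.
apply: IH.
- have := sg; rewrite gE size_mul // => H; rewrite -ltnS (leq_trans _ H) //.
  move: sP; rewrite -subn1; set a := size h; set b := size P; lia.
- exact: h0.
- exact: rem_uniq.
- by move=> Q /mem_rem; apply: sirr.
- by move=> Q /sqf; apply: contra => H; rewrite gE dvdp_mulr.
- move=> Q Qi Qh; rewrite mem_rem_uniq // inE.
  have Qs : Q \in s by apply: sall => //; rewrite gE dvdp_mulr.
  rewrite Qs andbT; apply/eqP => QP; subst Q.
  by move: (sqf P sP); rewrite gE dvdp_mul.
Qed.




Lemma in_qpoly_eq0 (P A : {poly F}) : P \is monic -> (1 < size P)%N ->
   (in_qpoly P A == 0) = (P %| A).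
Proof.
move=> PM sP.
have mE : mk_monic P = P by rewrite /mk_monic PM sP.
apply/eqP/idP => [/val_eqP /= | hDp].
  rewrite mE -Pdiv.IdomainMonic.modpE //.
by apply/val_eqP; rewrite /= mE -Pdiv.IdomainMonic.modpE //.
Qed.

Lemma charF : exists2 p, p \in [pchar F] & q = (p ^ logn p q)%N.
Proof.
have [p pp pc] := finPcharP F.
exists p => //; exact: (card_pprimeChar pc).
Qed.

Lemma frobD (R : comNzRingType) p k (x y : R) : p \in [pchar R] ->
  (x + y) ^+ (p ^ k) = x ^+ (p ^ k) + y ^+ (p ^ k).
Proof.
move=> pc; apply: exprDn_pchar.
rewrite pnatX pnatE ?(pcharf_prime pc) //.
by rewrite pc.
Qed.

Lemma frobXe (c : F) m : c ^+ (q ^ m) = c.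
Proof.
elim: m => [|m IH]; first by rewrite expr1.
by rewrite expnSr exprM IH expf_card.
Qed.

Lemma frob_all (P : {poly F}) p m : p \in [pchar F] -> q = (p ^ logn p q)%N ->
  (in_qpoly P 'X) ^+ (q ^ m) = in_qpoly P 'X ->
  forall A : {poly F}, (in_qpoly P A) ^+ (q ^ m) = in_qpoly P A.
Proof.
move=> pc qE xE A.
have pc' : p \in [pchar {poly %/ P}] by rewrite pchar_qpoly.
have QE : (q ^ m = p ^ (logn p q * m))%N by rewrite {1}qE expnM.
have Q0 : (0 < q ^ m)%N by rewrite expn_gt0 (ltnW (finNzRing_gt1 F)).
elim/poly_ind: A => [|A c IH]; first by rewrite in_qpoly0 expr0n gtn_eqF.
rewrite in_qpolyD in_qpolyM QE frobD // -QE exprMn IH xE.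
congr (_ + _).
by rewrite -rmorphXn /= -(rmorphXn polyC) frobXe.
Qed.

Lemma size_XnX (R : nzRingType) n : (1 < n)%N -> size ('X^n - 'X : {poly R}) = n.+1.
Proof.
move=> n1; rewrite size_polyDl ?size_polyXn // size_polyN size_polyX ltnS //.
Qed.

Lemma deg_le (P : {poly F}) m : P \is monic -> irreducible_poly P -> (0 < m)%N ->
  P %| 'X^(q^m) - 'X -> ((size P).-1 <= m)%N.
Proof.
move=> PM PI m0 Pd.
have hI : monic_irreducible_poly P := (PI, PM).
have sP : (1 < size P)%N by case: PI.
have [p pc qE] := charF.
have xE : in_qpoly P 'X ^+ (q^m) = in_qpoly P 'X.
  apply/eqP; rewrite -subr_eq0 -rmorphXn -rmorphB /= in_qpoly_eq0 //.
have allK : forall y : {poly %/ P with hI}, y ^+ (q^m) = y.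
  move=> y.
  have yE : y = in_qpoly P (y : {poly F}) :> {poly %/ P}.
    by apply: val_inj; rewrite /= Pdiv.Ring.rmodp_small // size_mk_monic.
  rewrite [in LHS]yE [in RHS]yE.
  exact: (frob_all pc qE xE).
have q1 := finNzRing_gt1 F.
have Q1 : (1 < q ^ m)%N.
  by apply: (leq_trans q1); rewrite -{1}(expn1 q) leq_exp2l.
have := @max_poly_roots _ ('X^(q^m) - 'X : {poly {poly %/ P with hI}}) (enum {poly %/ P with hI}).
rewrite enum_uniq size_XnX // -cardE card_qfpoly ltnS leq_exp2l //.
apply.
- by rewrite -size_poly_eq0 size_XnX.
- by apply/allP => y _; rewrite rootE !hornerE allK subrr.
- by [].
Qed.

Lemma dvd_XqX (P : {poly F}) : P \is monic -> irreducible_poly P ->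
  P %| 'X^(q^((size P).-1)) - 'X.
Proof.
move=> PM PI.
have hI : monic_irreducible_poly P := (PI, PM).
have sP : (1 < size P)%N by case: PI.
rewrite -in_qpoly_eq0 // rmorphB rmorphXn /= -(card_qfpoly hI).
by rewrite (expf_card ('qX : {poly %/ P with hI})) subrr.
Qed.

Lemma sqfree_XqX m : (0 < m)%N -> forall P : {poly F}, (1 < size P)%N ->
  ~~ (P * P %| 'X^(q^m) - 'X).
Proof.
move=> m0 P sP; apply/negP => /dvdpP [h hE].
have [p pc qE] := charF.
have q1 := finNzRing_gt1 F.
have e0 : (0 < logn p q)%N.
  by rewrite lt0n; apply/eqP => e; move: q1; rewrite {1}qE e expn0.
have Q0 : ((q ^ m)%:R = 0 :> F).
  by rewrite {1}qE -expnM natrX (pcharf0 pc) expr0n muln_eq0 (gtn_eqF e0) (gtn_eqF m0).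
have D : ('X^(q^m) - 'X : {poly F})^`() = -1.
  rewrite derivB derivXn derivX -mulr_natr -polyC_natr Q0 mulr0 sub0r //.
have : P %| ('X^(q^m) - 'X : {poly F})^`().
  rewrite hE !derivM; apply: dvdp_add; first exact/dvdp_mull/dvdp_mulr/dvdpp.
  apply/dvdp_mull/dvdp_add; first exact/dvdp_mull/dvdpp.
  exact/dvdp_mulr/dvdpp.
rewrite D dvdpNr dvdp1 => /eqP sP1; move: sP; rewrite sP1.
by [].
Qed.
End Alg.

Section Main.
Local Open Scope ring_scope.
Variable F : finFieldType.
Local Notation q := #|F|.

Definition G (k : nat) : {poly F} := \prod_(1 <= d < k.+1) ('X^(q ^ d)%N - 'X).

Lemma q1 : (1 < q)%N. Proof. exact: finNzRing_gt1. Qed.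

Lemma G_prop k : G k != 0 /\ (size (G k) <= 2 * q ^ k)%N.
Proof.
elim: k => [|k [G0 IH]]; first by rewrite /G big_geq // size_poly1 oner_neq0.
have Qk : (1 < q ^ k.+1)%N.
  by apply: (leq_trans q1); rewrite -{1}(expn1 q) leq_exp2l // q1.
have T0 : ('X^(q ^ k.+1)%N - 'X : {poly F}) != 0 by rewrite -size_poly_eq0 size_XnX.
rewrite /G big_nat_recr //= -/(G k); split; first by rewrite mulf_neq0.
apply: leq_trans (size_polyMleq _ _) _; rewrite size_XnX // addnS /=.
have : (2 * q ^ k <= q ^ k.+1)%N by rewrite expnS leq_mul2r q1 orbT.
move: IH; set a := size (G k); set b := (q ^ k)%N; set c := (q ^ k.+1)%N; lia.
Qed.

Lemma G_dvd d k : (1 <= d <= k)%N -> 'X^(q ^ d)%N - 'X %| G k.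
Proof.
elim: k => [|k IH]; first by case: d => [|[]].
case/andP => d1; rewrite leq_eqVlt => /orP [/eqP -> | dk].
  by rewrite /G big_nat_recr //= dvdp_mull.
by rewrite /G big_nat_recr //= -/(G k) dvdp_mulr // IH // d1.
Qed.


Lemma bounds (S : nat -> {poly F}) n m r (Q : nat -> {poly F}) (L : seq {poly F}) :
  is_prime_ordering S -> (1 <= n)%N -> is_decomp (Rprod S n) m r Q L ->
  (q ^ m <= pdeg (Rprod S n))%N /\ (pdeg (Rprod S n) < 2 * q ^ m.+1)%N.
Proof.
move=> [Sirr Sinj Sall Sdeg] n1 [[uL HL] HQ Qinj _ RE].
set Rn := Rprod S n.
have RnM : Rn \is monic.
  by rewrite /Rn /Rprod big_nat_cond; apply: monic_prod => i /andP [/andP [i1 _] _]; case: (Sirr i i1).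
have Rn0 : Rn != 0 by apply: monic_neq0.
have sRn : (2 <= size Rn)%N.
  have : S 1%N %| Rn by rewrite /Rn /Rprod big_ltn // dvdp_mulr.
  move/(dvdp_leq Rn0); apply: leq_trans; by case: (Sirr 1%N isT) => _ [].
have Lirr : forall P, P \in L -> mirr P by move=> P /HL [].
split.
  case: m HL RE HQ Qinj => [|m] HL RE HQ Qinj.
    by rewrite expn0 /pdeg -ltnS prednK // ltnW.
  have f0 : ('X^(q ^ m.+1)%N - 'X : {poly F}) != 0.
    rewrite -size_poly_eq0 size_XnX //.
    by apply: (leq_trans q1); rewrite -{1}(expn1 q) leq_exp2l // q1.
  have fL : 'X^(q ^ m.+1)%N - 'X %| \prod_(P <- L) P.
    apply: sqfree_dvd => //; first exact: sqfree_XqX.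
    move=> P [PM PI] Pf; apply/HL; split => //.
    exact: deg_le.
  have : 'X^(q ^ m.+1)%N - 'X %| Rn by rewrite /Rn RE dvdp_mulr.
  move/(dvdp_leq Rn0); rewrite size_XnX /pdeg.
    by move=> H; rewrite -ltnS prednK // ltnW.
  by apply: (leq_trans q1); rewrite -{1}(expn1 q) leq_exp2l // q1.
set Lall := L ++ map Q (iota 0 r).
have RnE : Rn = \prod_(P <- Lall) P.
  rewrite /Rn RE big_cat big_map /=; congr (_ * _).
  by rewrite -(big_mkord xpredT) /index_iota subn0.
have [G0 sG] := G_prop m.+1.
have : Rn %| G m.+1.
  rewrite RnE; apply: prod_dvd.
    rewrite /Lall cat_uniq uL /=; apply/andP; split.
      apply/hasPn => _ /mapP [i ir ->]; apply/negP => /HL [_].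
      have ir' : (i < r)%N by rewrite mem_iota add0n in ir.
      by rewrite (proj2 (HQ i ir')) ltnn.
    rewrite map_inj_in_uniq ?iota_uniq //.
    move=> i j; rewrite !mem_iota !add0n => ir jr; exact: Qinj.
  move=> P; rewrite /Lall mem_cat => /orP [/HL [PI Pm] | /mapP [i ir ->]].
    split => //; apply: dvdp_trans (dvd_XqX PI.1 PI.2) (G_dvd _).
    have sP : (1 < size P)%N by case: PI.2.
    move: Pm; rewrite /pdeg; move: sP; clear; set a := size P; lia.
  have ir' : (i < r)%N by rewrite mem_iota add0n in ir.
  have [QI Qd] := HQ i ir'.
  split => //; apply: dvdp_trans (dvd_XqX QI.1 QI.2) (G_dvd _).
  by rewrite -/(pdeg (Q i)) Qd leqnn.
move/(dvdp_leq G0) => H.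
move: sRn H sG; rewrite /pdeg; set a := size Rn; set b := size (G m.+1).
set c := (2 * #|F| ^ m.+1)%N; clear; lia.
Qed.

End Main.

Section Reals.
Local Open Scope R_scope.

Lemma INR_expn (a b : nat) : INR (a ^ b)%N = (pow (INR a) b).
Proof.
elim: b => [|b IH]; first by rewrite expn0.
by rewrite expnS mulnE mult_INR IH.
Qed.

Lemma ln_le' (x y : R) : (0 < x) -> (x <= y) -> (ln x <= ln y).
Proof.
move=> x0 /Rle_lt_or_eq_dec [xy|->]; last exact: Rle_refl.
by apply: Rlt_le; apply: ln_increasing.
Qed.

Lemma logq_pow (q N : nat) : (2 <= q)%N -> logq q (INR (q ^ N)%N) = INR N.
Proof.
move=> q2.
have hq : (1 < INR q) by apply: (lt_INR 1); apply/ltP.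
have a0 : (0 < ln (INR q)) by rewrite -ln_1; apply: ln_increasing; lra.
rewrite /logq INR_expn ln_pow; last by lra.
field; lra.
Qed.

Lemma real_part (q N m : nat) : (2 <= q)%N -> (q ^ m <= N)%N -> (N < 2 * q ^ m.+1)%N ->
  (INR m <= logq q (INR N) <= INR m + 2).
Proof.
move=> q2 lo hi.
have hq : (1 < INR q) by apply: (lt_INR 1); apply/ltP.
have a0 : (0 < ln (INR q)) by rewrite -ln_1; apply: ln_increasing; lra.
have qm : (0 < INR q ^ m) by apply: pow_lt; lra.
have lo' : (INR q ^ m <= INR N) by rewrite -INR_expn; apply: le_INR; apply/leP.
have hi' : (INR N <= 2 * INR q ^ m.+1).
  rewrite -INR_expn -[2]/(INR 2) -mult_INR -mulnE; apply: le_INR; apply/leP; exact: ltnW.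
have N0 : (0 < INR N) by lra.
have L1 : (INR m * ln (INR q) <= ln (INR N)).
  by rewrite -ln_pow; [apply: ln_le' | lra].
have L2 : (ln (INR N) <= ln 2 + INR m.+1 * ln (INR q)).
  rewrite -ln_pow; last lra.
  rewrite -ln_mult; [apply: ln_le' => // | lra | apply: pow_lt; lra].
have L3 : (ln 2 <= ln (INR q)).
  apply: ln_le'; first lra.
  by rewrite -[2]/(INR 2); apply: le_INR; apply/leP.
rewrite S_INR in L2.
rewrite /logq; split.
- apply: (Rmult_le_reg_r (ln (INR q))) => //.
  rewrite /Rdiv Rmult_assoc Rinv_l; lra.
- apply: (Rmult_le_reg_r (ln (INR q))) => //.
  rewrite /Rdiv Rmult_assoc Rinv_l; nra.
Qed.

Definition two : R := 2.
Definition one : R := 1.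
Lemma two_eq : two = 2. Proof. by []. Qed.
Lemma one_eq : one = 1. Proof. by []. Qed.

Lemma fin1 (a : R) (m : nat) : INR m <= a <= INR m + 2 -> Rabs (a - INR m) <= two.
Proof. move=> [h1 h2]; rewrite two_eq Rabs_pos_eq; lra. Qed.
Lemma fin2 (a : R) (m : nat) : INR m <= a <= INR m + 2 -> INR m <= one * a.
Proof. move=> [h1 h2]; rewrite one_eq; lra. Qed.

End Reals.

Theorem lemma7p6 :
  (exists C : R,
     forall (F : finFieldType) (S : nat -> {poly F}),
       is_prime_ordering S ->
       forall (n : nat), (1 <= n)%N ->
       forall (m r : nat) (Q : nat -> {poly F}) (L : seq {poly F}),
         is_decomp (Rprod S n) m r Q L ->
         Rle (Rabs (Rminus (logq #|F| (logq #|F| (INR (pabs (Rprod S n))))) (INR m))) C)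
  /\
  (exists C : R,
     forall (F : finFieldType) (S : nat -> {poly F}),
       is_prime_ordering S ->
       forall (n : nat), (1 <= n)%N ->
       forall (m r : nat) (Q : nat -> {poly F}) (L : seq {poly F}),
         is_decomp (Rprod S n) m r Q L ->
         (1 <= m)%N ->
         Rle (INR m) (Rmult C (logq #|F| (logq #|F| (INR (pabs (Rprod S n))))))).
Proof.
split.
- exists two => F S HS n n1 m r Q L HD.
  have [lo hi] := bounds HS n1 HD.
  rewrite /pabs logq_pow ?finNzRing_gt1 //.
  by apply: fin1; apply: real_part (finNzRing_gt1 F) lo hi.
- exists one => F S HS n n1 m r Q L HD _.
  have [lo hi] := bounds HS n1 HD.
  rewrite /pabs logq_pow ?finNzRing_gt1 //.
  by apply: fin2; apply: real_part (finNzRing_gt1 F) lo hi.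
Qed.
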